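(* Fix a $\rho$-flag on $V$ with adapted basis $v_1,\dots,v_n$; a $G$-graded structure on it is given by an arbitrary tuple $(h_1,\dots,h_n)\in G^n$ with $\deg v_i=h_i$. Let $\mathcal F$ and $\mathcal F'$ be the $G$-graded $\rho$-flags given by $(h_i)$ and $(h'_i)$. Then ${\rm END}(\mathcal F)\cong{\rm END}(\mathcal F')$ as $G$-graded algebras if and only if $(h_i)$ and $(h'_i)$ lie in the same orbit of the right action of the group $\prod_{\alpha\in\mathcal C}S(\alpha)\rtimes({\rm Aut}_0(\mathcal C)\ltimes G^q)$ on $G^n$ described in the context; equivalently, iff there exist $(\psi_\alpha)_{\alpha\in\mathcal C}\in\prod_{\alpha}S(\alpha)$, $g\in{\rm Aut}_0(\mathcal C)$ and $(\sigma_t)_{1\le t\le q}\in G^q$ such that $h'_i=h_{\psi_{g(\hat i)}(\tilde g(i))}\,\sigma_{p(i)}$ for all $1\le i\le n$, where $p(i)$ is the index with $\hat i\in\mathcal C^{p(i)}$. Thus the isomorphism classes of $G$-graded algebras ${\rm END}(\mathcal F)$, $\mathcal F$ a $G$-graded $\rho$-flag, correspond bijectively to the orbits of this action.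
   Context: Let $k$ be a field, $G$ a group, $\rho$ a preorder on $\{1,\dots,n\}$; $i\sim j$ iff $i\rho j$ and $j\rho i$; $\mathcal C$ is the set of classes, $\hat i$ the class of $i$, ordered by $\hat i\le\hat j$ iff $i\rho j$; $m_\alpha=|\alpha|$. A $\rho$-flag $(V,(V_\alpha)_{\alpha\in\mathcal C})$ is an $n$-dimensional $k$-space with subspaces $V_\alpha$ having a basis $v_1,\dots,v_n$ with $\{v_i:\hat i\le\alpha\}$ a basis of $V_\alpha$ for all $\alpha$ (adapted basis). A $G$-graded $\rho$-flag is a $\rho$-flag where $V$ is $G$-graded and the adapted basis is homogeneous. ${\rm END}(\mathcal F)$ is the algebra of linear $f:V\to V$ with $f(V_\alpha)\subseteq V_\alpha$, graded by ${\rm END}(\mathcal F)_\sigma=\{f: f(V_h)\subseteq V_{\sigma h}\ \forall h\in G\}$. ${\rm Aut}_0(\mathcal C)$ is the group of poset automorphisms $g$ of $\mathcal C$ with $m_{g(\alpha)}=m_\alpha$; for such $g$, $\tilde g\in S_n$ is given by: if $\alpha=\{i_1<\dots<i_r\}$ and $g(\alpha)=\{j_1<\dots<j_r\}$ then $\tilde g(i_s)=j_s$. $\mathcal C^1,\dots,\mathcal C^q$ are the connected components of $\mathcal C$ (of its comparability graph), and $\tau_g\in S_q$ is defined by $g(\mathcal C^t)=\mathcal C^{\tau_g(t)}$. $S(\alpha)$ is the symmetric group on the subset $\alpha\subseteq\{1,\dots,n\}$. Right actions on $G^n$: $(h_i)\leftarrow g=(h_{\tilde g(i)})_i$; $(h_i)\leftarrow(\sigma_t)=(h_i\sigma_{p(i)})_i$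 with $\hat i\in\mathcal C^{p(i)}$; $(h_i)\leftarrow(\psi_\alpha)=(h_{\psi_{\hat i}(i)})_i$. ${\rm Aut}_0(\mathcal C)$ acts on the right on $G^q$ by $(\sigma_t)\leftarrow g=(\sigma_{\tau_g(t)})_t$, giving ${\rm Aut}_0(\mathcal C)\ltimes G^q$; ${\rm Aut}_0(\mathcal C)$ acts on the left on $\prod_\alpha S(\alpha)$ by $g\to(\psi_\alpha)=(\psi'_\alpha)$ with $\psi'_\alpha(i)=\tilde g(\psi_{g^{-1}(\alpha)}(\tilde g^{-1}(i)))$ (and $G^q$ acts trivially), giving $\prod_\alpha S(\alpha)\rtimes({\rm Aut}_0(\mathcal C)\ltimes G^q)$. Its right action on $G^n$ is $(h_i)\leftarrow((\psi_\alpha)\rtimes(g\ltimes(\sigma_t)))=(((h_i)\leftarrow(\psi_\alpha))\leftarrow g)\leftarrow(\sigma_t)$. *)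

(* Defs.v *)
From HB Require Import structures.
From mathcomp Require Import all_boot all_order all_algebra all_fingroup.
Set Implicit Arguments. Unset Strict Implicit. Unset Printing Implicit Defensive.
Import GRing.Theory.
Local Open Scope ring_scope.

Definition is_group (G : Type) (mul : G -> G -> G) (one : G) (inv : G -> G) : Prop :=
  (forall x y z, mul x (mul y z) = mul (mul x y) z) /\
  (forall x, mul one x = x /\ mul x one = x) /\
  (forall x, mul (inv x) x = one /\ mul x (inv x) = one).

Section Classes.
Variables (n : nat) (rho : rel 'I_n).

(* rho is a preorder on {1,...,n} (here 'I_n = {0,...,n-1}) *)
Definition preorder_rel : Prop := reflexive rho /\ transitive rho.

Definition cls (i : 'I_n) : {set 'I_n} := [set j | rho i j && rho j i].

Definition classes : {set {set 'I_n}} := [set cls i | i : 'I_n].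

Definition cle (a b : {set 'I_n}) : bool :=
  [exists i, exists j, [&& i \in a, j \in b & rho i j]].

Definition comp_rel (a b : {set 'I_n}) : bool :=
  [&& a \in classes, b \in classes & cle a b || cle b a].

Definition component (i : 'I_n) : {set {set 'I_n}} :=
  [set b | connect comp_rel (cls i) b].

Definition Aut0 (g : {set 'I_n} -> {set 'I_n}) : Prop :=
  (forall a, a \in classes -> g a \in classes) /\
  {in classes &, injective g} /\
  {in classes &, forall a b, cle (g a) (g b) = cle a b} /\
  (forall a, a \in classes -> #|g a| = #|a|).

(* \tilde g : the s-th smallest element of \hat i goes to the s-th smallest
   element of g(\hat i)  (enum of a set of ordinals lists it increasingly) *)
Definition gtilde (g : {set 'I_n} -> {set 'I_n}) (i : 'I_n) : 'I_n :=
  nth i (enum (g (cls i))) (index i (enum (cls i))).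

Definition Sfam (psi : {set 'I_n} -> {perm 'I_n}) : Prop :=
  forall a, a \in classes -> perm_on a (psi a).

Variables (G : Type) (mul : G -> G -> G).

Definition actS (h : 'I_n -> G) (psi : {set 'I_n} -> {perm 'I_n}) : 'I_n -> G :=
  fun i => h (psi (cls i) i).
Definition actAut (h : 'I_n -> G) (g : {set 'I_n} -> {set 'I_n}) : 'I_n -> G :=
  fun i => h (gtilde g i).
(* (sigma_t) in G^q is indexed directly by the connected components *)
Definition actG (h : 'I_n -> G) (sigma : {set {set 'I_n}} -> G) : 'I_n -> G :=
  fun i => mul (h i) (sigma (component i)).

Definition act h psi g sigma : 'I_n -> G := actG (actAut (actS h psi) g) sigma.

Definition same_orbit (h h' : 'I_n -> G) : Prop :=
  exists psi g sigma, Sfam psi /\ Aut0 g /\ h' = act h psi g sigma.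

End Classes.

Section Flags.
Variables (k : fieldType) (n : nat) (rho : rel 'I_n) (B : 'M[k]_n).
(* V = k^n (row vectors); the adapted basis v_i = row i B; f(v) = v *m A *)

Definition in_span (P : 'I_n -> Prop) (v : 'rV[k]_n) : Prop :=
  exists c : 'I_n -> k, (forall i, ~ P i -> c i = 0) /\
                        v = \sum_i c i *: row i B.

Definition flag_sub (a : {set 'I_n}) : 'rV[k]_n -> Prop :=
  in_span (fun i => cle rho (cls rho i) a).

Definition END (A : 'M[k]_n) : Prop :=
  forall a, a \in classes rho -> forall v, flag_sub a v -> flag_sub a (v *m A).

Variables (G : Type) (mul : G -> G -> G).

Definition ENDg (h : 'I_n -> G) (s : G) (A : 'M[k]_n) : Prop :=
  END A /\ forall (x : G) v, in_span (fun i => h i = x) v ->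
                             in_span (fun i => h i = mul s x) (v *m A).

Definition graded_iso (h h' : 'I_n -> G) : Prop :=
  exists phi : 'M[k]_n -> 'M[k]_n,
    (forall A, END A -> END (phi A)) /\
    (forall A1 A2, END A1 -> END A2 -> phi A1 = phi A2 -> A1 = A2) /\
    (forall A', END A' -> exists A, END A /\ phi A = A') /\
    (forall (c : k) A1 A2, END A1 -> END A2 ->
        phi (c *: A1 + A2) = c *: phi A1 + phi A2) /\
    (forall A1 A2, END A1 -> END A2 -> phi (A1 *m A2) = phi A1 *m phi A2) /\
    phi 1%:M = 1%:M /\
    (forall s A, END A -> (ENDg h s A <-> ENDg h' s (phi A))).

End Flags.

(* Main.v *)
Require Import Defs.
From HB Require Import structures.
From mathcomp Require Import all_boot all_order all_algebra all_fingroup.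
From Stdlib Require Import Classical FunctionalExtensionality.
Set Implicit Arguments. Unset Strict Implicit. Unset Printing Implicit Defensive.
Import GRing.Theory.
Local Open Scope ring_scope.

Section Cls.
Variables (n : nat) (rho : rel 'I_n).
Hypothesis Hrho : preorder_rel rho.

Lemma rhoR : reflexive rho. Proof. by case: Hrho. Qed.
Lemma rhoT x y z : rho x y -> rho y z -> rho x z.
Proof. by case: Hrho => _ T; apply: T. Qed.

Lemma in_cls i j : (j \in cls rho i) = rho i j && rho j i.
Proof. by rewrite inE. Qed.

Lemma mem_cls i : i \in cls rho i.
Proof. by rewrite in_cls rhoR. Qed.

Lemma cls_eq i j : j \in cls rho i -> cls rho j = cls rho i.
Proof.
rewrite in_cls => /andP[Hij Hji]; apply/setP=> x; rewrite !in_cls.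
apply/andP/andP=> [][H1 H2]; split.
- exact: rhoT Hij H1.
- exact: rhoT H2 Hji.
- exact: rhoT Hji H1.
- exact: rhoT H2 Hij.
Qed.

Lemma cle_cls i j : cle rho (cls rho i) (cls rho j) = rho i j.
Proof.
apply/existsP/idP=> [[x /existsP[y /and3P[Hx Hy Hxy]]]|Hij].
- move: Hx Hy; rewrite !in_cls => /andP[Hix _] /andP[_ Hyj].
  exact: rhoT (rhoT Hix Hxy) Hyj.
- by exists i; apply/existsP; exists j; rewrite !mem_cls Hij.
Qed.

Lemma classes_cls i : cls rho i \in Defs.classes rho.
Proof. by apply/imsetP; exists i. Qed.

Lemma classesP a : a \in Defs.classes rho -> exists x, a = cls rho x.
Proof. by case/imsetP=> x _ ->; exists x. Qed.

Lemma cls_eqP i j : cls rho i = cls rho j -> rho i j /\ rho j i.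
Proof. by move=> E; have := mem_cls j; rewrite -E in_cls => /andP. Qed.

Section Gt.
Variable g : {set 'I_n} -> {set 'I_n}.
Hypothesis Hg : Aut0 rho g.

Lemma gtilde_mem i : gtilde rho g i \in g (cls rho i).
Proof.
case: Hg => Hc [_ [_ Hs]].
rewrite /gtilde -mem_enum mem_nth // -cardE Hs ?classes_cls // cardE index_mem mem_enum.
exact: mem_cls.
Qed.

Lemma cls_gtilde i : cls rho (gtilde rho g i) = g (cls rho i).
Proof.
case: Hg => Hc _; have := Hc _ (classes_cls i); case/classesP=> x Ex.
by rewrite Ex; apply: cls_eq; rewrite -Ex gtilde_mem.
Qed.

Lemma gtilde_inj : injective (gtilde rho g).
Proof.
move=> i j E.
case: Hg => Hc [Hi [_ Hs]].
have Ec : cls rho i = cls rho j.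
  by apply: Hi; rewrite ?classes_cls // -!cls_gtilde E.
move: E; rewrite /gtilde Ec.
set s := enum (g (cls rho j)).
have Hsz : size s = size (enum (cls rho j)).
  by rewrite /s -!cardE Hs ?classes_cls.
have Hi' : (index i (enum (cls rho j)) < size s)%N.
  by rewrite Hsz index_mem mem_enum -Ec mem_cls.
have Hj' : (index j (enum (cls rho j)) < size s)%N.
  by rewrite Hsz index_mem mem_enum mem_cls.
rewrite (set_nth_default j) // => /eqP.
rewrite nth_uniq ?enum_uniq // => /eqP E.
have Hi2 : i \in enum (cls rho j) by rewrite mem_enum -Ec mem_cls.
by rewrite -(nth_index j Hi2) E nth_index // mem_enum mem_cls.
Qed.

End Gt.
End Cls.
Section Coord.
Variables (k : fieldType) (n : nat) (B : 'M[k]_n).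
Hypothesis HB : B \in unitmx.

Lemma spanE (P : 'I_n -> Prop) v :
  in_span B P v <-> forall j, ~ P j -> (v *m invmx B) 0 j = 0.
Proof.
split.
- case=> c [Hc ->] j Pj.
  have -> : \sum_i c i *: row i B = (\row_i c i) *m B.
    by rewrite mulmx_sum_row; apply: eq_bigr => i _; rewrite mxE.
  by rewrite mulmxK // mxE Hc.
- move=> H; exists (fun j => (v *m invmx B) 0 j); split; first exact: H.
  by rewrite -mulmx_sum_row mulmxKV.
Qed.

Lemma preserveE (X : Type) (C : X -> Prop) (P Q : X -> 'I_n -> Prop) A :
  (forall x, C x -> forall v, in_span B (P x) v -> in_span B (Q x) (v *m A)) <->
  (forall i j, (B *m A *m invmx B) i j != 0 -> forall x, C x -> P x i -> Q x j).
Proof.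
set M := B *m A *m invmx B.
have key w : (w *m B) *m A *m invmx B = w *m M by rewrite /M !mulmxA.
split.
- move=> H i j Mij x Cx Pxi; apply: NNPP => nQ.
  have /H : in_span B (P x) (delta_mx 0 i *m B).
    apply/spanE => l nPl; rewrite mulmxK // mxE.
    rewrite eqxx /=; case: eqP => [Eli|_] //.
    by case: nPl; rewrite Eli.
  move=> /(_ Cx)/spanE/(_ j nQ); rewrite key -rowE mxE => E.
  by move: Mij; rewrite E eqxx.
- move=> H x Cx v /spanE Hv; apply/spanE => j nQ.
  rewrite -{1}(mulmxKV HB v) key mxE; apply: big1 => i _.
  have [->|wi] := eqVneq ((v *m invmx B) 0 i) 0; first by rewrite mul0r.
  have [->|Mi] := eqVneq (M i j) 0; first by rewrite mulr0.
  exfalso; apply: nQ; apply: (H i j Mi x Cx); apply: NNPP => nP.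
  by move: wi; rewrite Hv ?eqxx.
Qed.


Definition T A := B *m A *m invmx B.

Variable rho : rel 'I_n.
Hypothesis Hrho : preorder_rel rho.

Definition Sp (M : 'M[k]_n) := forall i j, M i j != 0 -> rho j i.

Lemma ENDE A : END rho B A <-> Sp (T A).
Proof.
apply: iff_trans (@preserveE _ (fun a => a \in Defs.classes rho)
   (fun a i => cle rho (cls rho i) a) (fun a i => cle rho (cls rho i) a) A) _.
split=> H i j Mij.
- by have := H i j Mij _ (classes_cls rho i); rewrite !(cle_cls Hrho) => /(_ (rhoR Hrho i)).
- move=> a /classesP [y ->]; rewrite !(cle_cls Hrho); apply: rhoT => //; exact: H.
Qed.

Variables (G : Type) (mul : G -> G -> G).
Definition Sg (h : 'I_n -> G) s (M : 'M[k]_n) := forall i j, M i j != 0 -> h j = mul s (h i).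

Lemma ENDgE h s A : ENDg rho B mul h s A <-> END rho B A /\ Sg h s (T A).
Proof.
split=> -[H1 H2]; split=> //.
- have H3 := proj1 (@preserveE _ (fun _ => True) (fun x i => h i = x) (fun x j => h j = mul s x) A) (fun x _ => H2 x).
  by move=> i j Mij; apply: (H3 i j Mij (h i) I erefl).
- move=> x; apply: (proj2 (@preserveE _ (fun _ => True) (fun x i => h i = x) (fun x j => h j = mul s x) A) _ x I) => i j Mij y _ <-; exact: H2.
Qed.

End Coord.


Lemma sum_neq0 (k : fieldType) (I : finType) (F : I -> k) :
  \sum_i F i != 0 -> exists i, F i != 0.
Proof.
move=> H; apply: NNPP => nE; move/negP: H; apply.
apply/eqP; apply: big1 => i _.
by apply/eqP; apply: NNPP => Hi; apply: nE; exists i; apply/negP.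
Qed.

Lemma mulmx_neq0 (k : fieldType) n (M N : 'M[k]_n) i j :
  (M *m N) i j != 0 -> exists l, M i l != 0 /\ N l j != 0.
Proof.
rewrite mxE => /sum_neq0 [l]; rewrite mulf_eq0 negb_or => /andP[? ?]; by exists l.
Qed.

Section Alg.
Variables (k : fieldType) (n : nat) (rho : rel 'I_n).
Hypothesis Hrho : preorder_rel rho.
Variables (G : Type) (mul : G -> G -> G) (one : G) (inv : G -> G).
Hypothesis HG : is_group mul one inv.

Local Notation Sp := (@Sp k n rho).
Local Notation Sg := (@Sg k n G mul).

Lemma Sp0 : Sp 0. Proof. by move=> i j; rewrite mxE eqxx. Qed.
Lemma Sp1 : Sp 1%:M.
Proof.
move=> i j; rewrite mxE; case: (i =P j) => [->|_]; first by rewrite rhoR.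
by rewrite eqxx.
Qed.
Lemma SpD M N : Sp M -> Sp N -> Sp (M + N).
Proof.
move=> HM HN i j; rewrite mxE.
have [E|/HM Hr _] := eqVneq (M i j) 0; last exact: Hr.
rewrite E add0r; exact: HN.
Qed.
Lemma SpZ c M : Sp M -> Sp (c *: M).
Proof. by move=> HM i j; rewrite mxE mulf_eq0 negb_or => /andP[_ /HM]. Qed.
Lemma SpM M N : Sp M -> Sp N -> Sp (M *m N).
Proof.
move=> HM HN i j /mulmx_neq0 [l [/HM H1 /HN H2]]; exact: (rhoT Hrho H2 H1).
Qed.
Lemma Sp_delta i j : rho j i -> Sp (delta_mx i j).
Proof.
move=> H a b; rewrite mxE; case: (a =P i) => [->|_]; case: (b =P j) => [->|_] //=;
  by rewrite eqxx.
Qed.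
Lemma Sp_sum (I : finType) (F : I -> 'M[k]_n) : (forall i, Sp (F i)) -> Sp (\sum_i F i).
Proof.
move=> H; apply: (big_ind Sp) => //; [exact: Sp0 | exact: SpD].
Qed.

Lemma gA x y z : mul x (mul y z) = mul (mul x y) z. Proof. by case: HG. Qed.
Lemma g1m x : mul one x = x. Proof. by case: HG => _ [H _]; case: (H x). Qed.
Lemma gm1 x : mul x one = x. Proof. by case: HG => _ [H _]; case: (H x). Qed.
Lemma gVm x : mul (inv x) x = one. Proof. by case: HG => _ [_ H]; case: (H x). Qed.
Lemma gmV x : mul x (inv x) = one. Proof. by case: HG => _ [_ H]; case: (H x). Qed.
Lemma gKm x y : mul (inv x) (mul x y) = y. Proof. by rewrite gA gVm g1m. Qed.
Lemma gmK x y : mul (mul y x) (inv x) = y. Proof. by rewrite -gA gmV gm1. Qed.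
Lemma gmVK x y : mul (mul y (inv x)) x = y. Proof. by rewrite -gA gVm gm1. Qed.
Lemma gIm x y z : mul x y = mul x z -> y = z.
Proof. by move=> E; rewrite -(gKm x y) E gKm. Qed.
Lemma gmI x y z : mul y x = mul z x -> y = z.
Proof. by move=> E; rewrite -(gmK x y) E gmK. Qed.

Variable h : 'I_n -> G.

Lemma Sg0 s : Sg h s 0. Proof. by move=> i j; rewrite mxE eqxx. Qed.
Lemma Sg1 : Sg h one 1%:M.
Proof.
move=> i j; rewrite mxE; case: (i =P j) => [->|_]; first by rewrite g1m.
by rewrite eqxx.
Qed.
Lemma SgD s M N : Sg h s M -> Sg h s N -> Sg h s (M + N).
Proof.
move=> HM HN i j; rewrite mxE.
have [E|/HM Hr _] := eqVneq (M i j) 0; last exact: Hr.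
rewrite E add0r; exact: HN.
Qed.
Lemma SgZ s c M : Sg h s M -> Sg h s (c *: M).
Proof. by move=> HM i j; rewrite mxE mulf_eq0 negb_or => /andP[_ /HM]. Qed.
Lemma SgM s t M N : Sg h s M -> Sg h t N -> Sg h (mul t s) (M *m N).
Proof.
by move=> HM HN i j /mulmx_neq0 [l [/HM H1 /HN H2]]; rewrite H2 H1 gA.
Qed.
Lemma Sg_delta i j : Sg h (mul (h j) (inv (h i))) (delta_mx i j).
Proof.
move=> a b; rewrite mxE; case: (a =P i) => [->|_]; case: (b =P j) => [->|_] //=;
  by rewrite ?gmVK ?eqxx.
Qed.
Lemma Sg_sum s (I : finType) (F : I -> 'M[k]_n) : (forall i, Sg h s (F i)) -> Sg h s (\sum_i F i).
Proof.
move=> H; apply: (big_ind (Sg h s)) => //; [exact: Sg0 | exact: SgD].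
Qed.

End Alg.


Record ciso (k : fieldType) n (rho : rel 'I_n) (G : Type) (mul : G -> G -> G)
   (h h' : 'I_n -> G) (Phi : 'M[k]_n -> 'M[k]_n) : Prop := Ciso {
  c_sp : forall M, Sp rho M -> Sp rho (Phi M);
  c_inj : forall M1 M2, Sp rho M1 -> Sp rho M2 -> Phi M1 = Phi M2 -> M1 = M2;
  c_surj : forall M', Sp rho M' -> exists M, Sp rho M /\ Phi M = M';
  c_lin : forall c M1 M2, Sp rho M1 -> Sp rho M2 ->
     Phi (c *: M1 + M2) = c *: Phi M1 + Phi M2;
  c_mul : forall M1 M2, Sp rho M1 -> Sp rho M2 -> Phi (M1 *m M2) = Phi M1 *m Phi M2;
  c_one : Phi 1%:M = 1%:M;
  c_gr : forall s M, Sp rho M -> (Sg mul h s M <-> Sg mul h' s (Phi M))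
}.

Section Red.
Variables (k : fieldType) (n : nat) (B : 'M[k]_n).
Hypothesis HB : B \in unitmx.
Variable rho : rel 'I_n.
Hypothesis Hrho : preorder_rel rho.
Variables (G : Type) (mul : G -> G -> G) (h h' : 'I_n -> G).

Definition Ti M := invmx B *m M *m B.
Local Notation T := (T B).

Lemma TK M : T (Ti M) = M.
Proof. by rewrite /T /Ti !mulmxA mulmxV // mul1mx mulmxK. Qed.
Lemma TiK A : Ti (T A) = A.
Proof. by rewrite /T /Ti !mulmxA mulVmx // mul1mx mulmxKV. Qed.
Lemma TM A C : T (A *m C) = T A *m T C.
Proof. by rewrite /T !mulmxA (mulmxKV HB). Qed.
Lemma TiM A C : Ti (A *m C) = Ti A *m Ti C.
Proof. by rewrite /Ti !mulmxA (mulmxK HB). Qed.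
Lemma TL c A C : T (c *: A + C) = c *: T A + T C.
Proof. by rewrite /T mulmxDr mulmxDl -scalemxAr -scalemxAl. Qed.
Lemma TiL c A C : Ti (c *: A + C) = c *: Ti A + Ti C.
Proof. by rewrite /Ti mulmxDr mulmxDl -scalemxAr -scalemxAl. Qed.
Lemma T1 : T 1%:M = 1%:M.
Proof. by rewrite /T mulmx1 mulmxV. Qed.
Lemma Ti1 : Ti 1%:M = 1%:M.
Proof. by rewrite /Ti mulmx1 mulVmx. Qed.

Lemma SpE_T M : Sp rho M <-> END rho B (Ti M).
Proof. by rewrite (ENDE HB Hrho) TK. Qed.

Lemma iso_to_ciso : graded_iso rho B mul h h' -> exists Phi, ciso (k:=k) rho mul h h' Phi.
Proof.
case=> phi [H1 [H2 [H3 [H4 [H5 [H6 H7]]]]]].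
exists (fun M => T (phi (Ti M))); split.
- by move=> M /SpE_T /H1 /(ENDE HB Hrho).
- move=> M1 M2 /SpE_T E1 /SpE_T E2 E.
  by rewrite -(TK M1) -(TK M2) (H2 _ _ E1 E2) // -(TiK (phi (Ti M1))) E TiK.
- move=> M' /SpE_T /H3 [A [EA EpA]]; exists (T A); split; first exact/(ENDE HB Hrho).
  by rewrite TiK EpA TK.
- by move=> c M1 M2 /SpE_T E1 /SpE_T E2; rewrite TiL H4 // TL.
- by move=> M1 M2 /SpE_T E1 /SpE_T E2; rewrite TiM H5 // TM.
- by rewrite Ti1 H6 T1.
- move=> s M /SpE_T E; have := H7 s _ E; rewrite !(ENDgE HB rho) TK => [[Ha Hb]].
  split=> Hs.
  + by case: (Ha (conj E Hs)).
  + by case: Hb => //; split=> //; exact: H1.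
Qed.

Lemma ciso_to_iso Phi : ciso (k:=k) rho mul h h' Phi -> graded_iso rho B mul h h'.
Proof.
case=> H1 H2 H3 H4 H5 H6 H7.
have EE A : END rho B A <-> Sp rho (T A) by apply: (ENDE HB Hrho).
exists (fun A => Ti (Phi (T A))); split; [|split; [|split; [|split; [|split; [|split]]]]].
- by move=> A /EE /H1; rewrite -(TK (Phi _)) => /SpE_T.
- move=> A1 A2 /EE E1 /EE E2 E.
  by rewrite -(TiK A1) -(TiK A2) (H2 _ _ E1 E2) // -(TK (Phi (T A1))) E TK.
- move=> A' /EE /H3 [M [EM EpM]]; exists (Ti M); split; first by apply/EE; rewrite TK.
  by rewrite TK EpM TiK.
- by move=> c A1 A2 /EE E1 /EE E2; rewrite TL H4 // TiL.
- by move=> A1 A2 /EE E1 /EE E2; rewrite TM H5 // TiM.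
- by rewrite T1 H6 Ti1.
- move=> s A E; have E' := proj1 (EE A) E.
  rewrite !(ENDgE HB rho) TK; have := H7 s _ E'.
  split=> -[_ Hs].
  + split; [apply/EE; rewrite TK; exact: H1 | exact/H].
  + by split=> //; apply/H.
Qed.

End Red.


Lemma inv_closed (k : fieldType) n (P : 'M[k]_n -> Prop) :
  P 1%:M -> (forall a M N, P M -> P N -> P (a *: M + N)) ->
  (forall M N, P M -> P N -> P (M *m N)) ->
  forall U, U \in unitmx -> P U -> P (invmx U).
Proof.
move=> P1 PL PM; case: n P P1 PL PM => [|n'] P P1 PL PM U HU PU.
  by rewrite [invmx U]thinmx0 -[0 : 'M_0](thinmx0 1%:M).
have P0 : P 0 by have := PL (-1) _ _ P1 P1; rewrite scaleN1r addNr.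
have PC c : P c%:M by have := PL c _ _ P1 P0; rewrite addr0 scalemx1.
have Ph q : P (horner_mx U q).
  elim/poly_ind: q => [|q c IH]; first by rewrite rmorph0.
  rewrite rmorphD rmorphM /= horner_mx_X horner_mx_C.
  by have := PL 1 _ _ (PM _ _ IH PU) (PC c); rewrite scale1r.
set p := char_poly U.
have CH : horner_mx U p = 0 := Cayley_Hamilton U.
have Hp := poly_take_drop 1 p.
have Ht : take_poly 1 p = (p`_0)%:P.
  by rewrite /take_poly poly_def big_ord1 expr0 alg_polyC.
set q := drop_poly 1 p.
have E : horner_mx U q *m U = - (p`_0)%:M.
  rewrite -Hp Ht rmorphD rmorphM /= expr1 horner_mx_X horner_mx_C in CH.
  by move/eqP: CH; rewrite addrC addr_eq0 => /eqP.
have p0 : p`_0 != 0.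
  rewrite /p char_poly_det mulf_eq0 negb_or signr_eq0 /=.
  by rewrite -unitfE -unitmxE.
have -> : invmx U = (- (p`_0)^-1) *: horner_mx U q + 0.
  rewrite addr0 -[RHS](mulmxK HU) -scalemxAl E scalerN scaleNr opprK.
  by rewrite -scalemx1 scalerA mulVf // scale1r mul1mx.
exact: PL.
Qed.


Section MxLemmas.
Variable k : fieldType.

Lemma delta_sand n (M : 'M[k]_n) (i j l m : 'I_n) :
  delta_mx i j *m M *m delta_mx l m = M j l *: delta_mx i m.
Proof.
rewrite -(mul_delta_mx (0 : 'I_1) i j) -(mul_delta_mx (0 : 'I_1) l m).
rewrite !mulmxA -(mulmxA _ _ M) -(mulmxA _ (_ *m M)).
rewrite [delta_mx 0 j *m M *m _]mx11_scalar -rowE -colE !mxE.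
by rewrite mul_mx_scalar -scalemxAl mul_delta_mx.
Qed.

Lemma mx_neq0 m p (M : 'M[k]_(m, p)) : M != 0 -> exists i j, M i j != 0.
Proof.
move=> H; apply: NNPP => nE; move/eqP: H; apply; apply/matrixP => i j.
rewrite mxE; apply: NNPP => nM; apply: nE; exists i, j; exact/eqP.
Qed.

Lemma outer_neq0 n (u : 'cV[k]_n) (v : 'rV[k]_n) : u != 0 -> v != 0 -> u *m v != 0.
Proof.
move=> /mx_neq0 [a [x Ha]] /mx_neq0 [y [b Hb]].
apply/eqP => /matrixP /(_ a b); rewrite !mxE big_ord1 => /eqP.
by rewrite (ord1 x) (ord1 y) in Ha Hb; rewrite mulf_eq0 (negbTE Ha) (negbTE Hb).
Qed.

Lemma scalar_mid n (u : 'cV[k]_n) (s : 'M[k]_1) (v : 'rV[k]_n) :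
  u *m s *m v = s 0 0 *: (u *m v).
Proof. by rewrite {1}[s]mx11_scalar mul_mx_scalar -scalemxAl. Qed.

End MxLemmas.

Section Core.
Variables (k : fieldType) (n : nat) (rho : rel 'I_n).
Hypothesis Hrho : preorder_rel rho.
Variables (G : Type) (mul : G -> G -> G) (one : G) (inv : G -> G).
Hypothesis HG : is_group mul one inv.
Variables (h h' : 'I_n -> G) (Phi : 'M[k]_n -> 'M[k]_n).
Hypothesis Hc : ciso rho mul h h' Phi.

Local Notation E i := (delta_mx i i : 'M[k]_n).
Local Notation Sp := (@Sp k n rho).

Lemma SpE i : Sp (E i). Proof. exact: Sp_delta (rhoR Hrho i). Qed.
Arguments SpE : clear implicits.
Lemma Sp0' : Sp 0. Proof. exact: Sp0. Qed.

Lemma Phi0 : Phi 0 = 0.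
Proof.
have := c_lin Hc 1 Sp0' Sp0'; rewrite !scale1r addr0 => E.
by apply: (@addrI _ (Phi 0)); rewrite addr0 -E.
Qed.

Lemma PhiZ c M : Sp M -> Phi (c *: M) = c *: Phi M.
Proof. by move=> H; have := c_lin Hc c H Sp0'; rewrite !addr0 Phi0 addr0. Qed.

Lemma PhiD M N : Sp M -> Sp N -> Phi (M + N) = Phi M + Phi N.
Proof. by move=> H1 H2; have := c_lin Hc 1 H1 H2; rewrite !scale1r. Qed.

Lemma Phi_sum (I : finType) (F : I -> 'M[k]_n) :
  (forall i, Sp (F i)) -> Phi (\sum_i F i) = \sum_i Phi (F i).
Proof.
move=> HF.
have : Sp (\sum_i F i) /\ Phi (\sum_i F i) = \sum_i Phi (F i).
  apply: (big_rec2 (fun y1 y2 => Sp y1 /\ Phi y1 = y2)).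
    by split; [exact: Sp0' | exact: Phi0].
  move=> i y1 y2 _ [H1 <-]; split; first exact: SpD.
  exact: PhiD.
by case.
Qed.

Definition f i := Phi (E i).

Lemma f_mul i j : f i *m f j = if i == j then f i else 0.
Proof.
rewrite /f -(c_mul Hc (SpE i) (SpE j)) mul_delta_mx_cond.
by case: (i =P j) => [->|_]; rewrite ?mulr1n ?mulr0n ?Phi0.
Qed.

Lemma f_idem i : f i *m f i = f i. Proof. by rewrite f_mul eqxx. Qed.

Lemma f_sum : \sum_i f i = 1%:M.
Proof.
rewrite /f -Phi_sum; last exact: SpE.
by rewrite -(c_one Hc) (scalar_mx_sum_delta _ 1); congr Phi; apply: eq_bigr => l _; rewrite scale1r.
Qed.

Lemma f_neq0 i : f i != 0.
Proof.
apply/eqP => E0; have : E i = 0.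
  by apply: (c_inj Hc (SpE i) Sp0'); rewrite Phi0.
by move/matrixP/(_ i i); rewrite !mxE !eqxx => /eqP; rewrite oner_eq0.
Qed.

Lemma f_sand i l : exists c, f i *m E l *m f i = c *: f i.
Proof.
have [X [HX EX]] := c_surj Hc (SpE l).
exists (X i i); rewrite -EX /f -!(c_mul Hc) ?delta_sand ?PhiZ //.
all: repeat first [exact: (SpE _) | exact: HX | apply: (SpM Hrho)].
Qed.

Lemma f_fact i : exists uv : 'cV[k]_n * 'rV[k]_n, f i = uv.1 *m uv.2.
Proof.
have [c Hc'] := fin_all_exists (f_sand i).
have Hs : f i = (\sum_l c l) *: f i.
  transitivity (f i *m 1%:M *m f i); first by rewrite mulmx1 f_idem.
  rewrite (scalar_mx_sum_delta _ 1) mulmx_sumr mulmx_suml scaler_suml.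
  by apply: eq_bigr => l _; rewrite scale1r Hc'.
have [l Hl] : exists l, c l != 0.
  apply: NNPP => nE; move: (f_neq0 i); rewrite Hs big1 ?scale0r ?eqxx // => l _.
  by apply/eqP; apply: NNPP => H; apply: nE; exists l; apply/negP.
exists ((c l)^-1 *: (f i *m delta_mx l 0), delta_mx 0 l *m f i) => /=.
rewrite -scalemxAl -mulmxA (mulmxA (delta_mx l 0)) mul_delta_mx mulmxA Hc'.
by rewrite scalerA mulVf // scale1r.
Qed.


Lemma core_perm : exists s : 'S_n, (forall i j, rho (s j) (s i) = rho j i) /\
  (forall i j, rho j i -> h' (s j) = mul (mul (h j) (inv (h i))) (h' (s i))).
Proof.
have [uv Huv] := fin_all_exists f_fact.
pose u i := (uv i).1; pose v i := (uv i).2.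
have fE i : f i = u i *m v i := Huv i.
have u0 i : u i != 0.
  by apply/eqP => H; move: (f_neq0 i); rewrite fE H mul0mx eqxx.
have v0 i : v i != 0.
  by apply/eqP => H; move: (f_neq0 i); rewrite fE H mulmx0 eqxx.
have vu i j : (v i *m u j) 0 0 = (i == j)%:R.
  have := f_mul i j; rewrite !fE mulmxA -(mulmxA (u i)) scalar_mid.
  case: (i =P j) => [<-|/eqP nij] Eq.
  - apply/eqP; rewrite -subr_eq0; apply/eqP.
    have : ((v i *m u i) 0 0 - 1) *: (u i *m v i) = 0 by rewrite scalerBl Eq scale1r subrr.
    move/eqP; rewrite scalemx_eq0 => /orP [/eqP //|].
    by rewrite -fE (negbTE (f_neq0 i)).
  - move/eqP: Eq; rewrite scalemx_eq0 (negbTE (outer_neq0 (u0 i) (v0 j))) orbF.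
    by move/eqP.
pose Q := \matrix_(a, i) u i a 0 : 'M[k]_n.
pose P := \matrix_(i, b) v i 0 b : 'M[k]_n.
have PQ : P *m Q = 1%:M.
  apply/matrixP => i j; rewrite !mxE -vu mxE; apply: eq_bigr => a _; by rewrite !mxE.
have dQ : \det Q != 0.
  apply/eqP => H; have := congr1 determinant PQ.
  by rewrite det_mulmx H mulr0 det1 => /eqP; rewrite eq_sym oner_eq0.
have [s Hs] : exists s : 'S_n, forall i, u i (s i) 0 != 0.
  move: dQ; rewrite -det_tr /determinant => /sum_neq0 [s].
  rewrite mulf_eq0 negb_or => /andP[_ Hp]; exists s => i.
  apply/negP => /eqP H; move: Hp; rewrite (bigD1 i) //= !mxE H mul0r eqxx.
  by [].
have sinj := @perm_inj _ s.
pose U := \sum_i E (s i) *m f i.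
have Uf j : U *m f j = E (s j) *m U.
  rewrite /U mulmx_suml mulmx_sumr; transitivity (E (s j) *m f j).
  - rewrite (bigD1 j) //= -mulmxA f_idem big1 ?addr0 // => i nij.
    by rewrite -mulmxA f_mul (negbTE nij) mulmx0.
  - rewrite (bigD1 j) //= mulmxA mul_delta_mx big1 ?addr0 // => i nij.
    by rewrite mulmxA mul_delta_mx_cond (inj_eq sinj) eq_sym (negbTE nij) mulr0n mul0mx.
pose W := \sum_i (u i (s i) 0)^-1 *: (u i *m delta_mx 0 (s i)).
have WU : W *m U = 1%:M.
  rewrite mulmx_suml -f_sum; apply: eq_bigr => i _.
  rewrite -scalemxAl mulmx_sumr (bigD1 i) //= big1 ?addr0.
  - rewrite !mulmxA -(mulmxA (u i)) mul_delta_mx fE mulmxA.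
    rewrite -(mulmxA (u i) (delta_mx 0 (s i))) [delta_mx 0 _ *m u i]mx11_scalar -rowE mxE.
    by rewrite mul_mx_scalar -scalemxAl scalerA mulVf ?scale1r.
  - move=> j nji; rewrite !mulmxA -(mulmxA (u i)) mul_delta_mx_cond (inj_eq sinj).
    by rewrite eq_sym (negbTE nji) mulr0n mulmx0 mul0mx.
have [_ HUu] := mulmx1_unit WU.
have SgE x : Sg mul h' one (E x).
  by have := @Sg_delta k n G mul one inv HG h' x x; rewrite (gmV HG).
have Sgf i : Sg mul h' one (f i).
  apply: (proj1 (c_gr Hc one (SpE i))).
  by have := @Sg_delta k n G mul one inv HG h i i; rewrite (gmV HG).
have SpU : Sp U.
  apply: Sp_sum => i; apply: (SpM Hrho (SpE _)); exact: (c_sp Hc (SpE i)).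
have SgU : Sg mul h' one U.
  apply: Sg_sum => i; have := SgM HG (SgE (s i)) (Sgf i); by rewrite (g1m HG).
have [SpUi SgUi] : Sp (invmx U) /\ Sg mul h' one (invmx U).
  apply: (@inv_closed k n (fun M => Sp M /\ Sg mul h' one M)) => //.
  - by split; [exact: (Sp1 Hrho) | exact: (Sg1 HG h')].
  - move=> a M N [H1 H2] [H3 H4]; split; first by apply: SpD => //; apply: SpZ.
    by apply: SgD => //; apply: SgZ.
  - move=> M N [H1 H2] [H3 H4]; split; first exact: SpM.
    by have := SgM HG H2 H4; rewrite (g1m HG).
have fUi i : f i *m invmx U = invmx U *m E (s i).
  by rewrite -{1}[f i](mulKmx HUu) Uf !mulmxA mulmxK.
have pA i j : rho j i -> rho (s j) (s i) /\
     h' (s j) = mul (mul (h j) (inv (h i))) (h' (s i)).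
  move=> Hji; have Sd : Sp (delta_mx i j) := Sp_delta Hji.
  pose F := Phi (delta_mx i j).
  have SpF : Sp F by apply: (c_sp Hc).

  have FE : f i *m F *m f j = F.
    rewrite /f /F -!(c_mul Hc) ?delta_sand ?mxE ?eqxx ?scale1r //.
    all: repeat first [exact: (SpE _) | exact: Sd | apply: (SpM Hrho)].
  pose Y := U *m F *m invmx U.
  have YE : Y = Y (s i) (s j) *: delta_mx (s i) (s j).
    rewrite -delta_sand /Y -{1}FE.
    by rewrite !mulmxA Uf -!mulmxA fUi !mulmxA.
  have Y0 : Y (s i) (s j) != 0.
    apply/negP => /eqP H0; move: YE; rewrite H0 scale0r => Y0.
    have : F = 0.
      have -> : F = invmx U *m Y *m U by rewrite /Y !mulmxA mulVmx // mul1mx mulmxKV.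
      by rewrite Y0 mulmx0 mul0mx.
    rewrite /F -Phi0 => /(c_inj Hc Sd Sp0') /matrixP /(_ i j).
    by rewrite !mxE !eqxx => /eqP; rewrite oner_eq0.
  split.
  - by apply: (SpM Hrho (SpM Hrho SpU SpF) SpUi).
  - have SgF : Sg mul h' (mul (h j) (inv (h i))) F.
      apply/(c_gr Hc _ Sd); exact: (@Sg_delta k n G mul one inv HG h i j).
    have := SgM HG (SgM HG SgU SgF) SgUi; rewrite (gm1 HG) (g1m HG); exact.
have pB i j : rho (s j) (s i) -> rho j i.
  move=> Hs'; apply: NNPP => nji.
  pose Z := invmx U *m delta_mx (s i) (s j) *m U.
  have SpZ' : Sp Z by apply: (SpM Hrho (SpM Hrho SpUi (Sp_delta Hs')) SpU).
  have [X [SpX EX]] := c_surj Hc SpZ'.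
  have HZ : f i *m Z *m f j = Z.
    rewrite /Z !mulmxA fUi -!mulmxA Uf !mulmxA.
    by rewrite -!mulmxA (mulmxA (delta_mx (s i) (s j))) mul_delta_mx (mulmxA (delta_mx (s i) (s i))) mul_delta_mx.
  have Xij : X i j = 0 by apply/eqP; apply: NNPP => H; apply: nji; apply: (SpX i j); exact/negP.
  have : Z = 0.
    rewrite -HZ -EX /f -!(c_mul Hc) ?delta_sand ?Xij ?scale0r ?Phi0 //.
    all: repeat first [exact: (SpE _) | exact: SpX | apply: (SpM Hrho)].
  move=> Z0; have : delta_mx (s i) (s j) = 0 :> 'M[k]_n.
    have -> : delta_mx (s i) (s j) = U *m Z *m invmx U by rewrite /Z !mulmxA mulmxV // mul1mx mulmxK.
    by rewrite Z0 mulmx0 mul0mx.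
  by move/matrixP/(_ (s i) (s j)); rewrite !mxE !eqxx => /eqP; rewrite oner_eq0.
exists s; split.
- move=> i j; apply/idP/idP; [exact: pB | by case/pA].
- by move=> i j /pA [].
Qed.

End Core.


Section Comb.
Variables (n : nat) (rho : rel 'I_n).
Hypothesis Hrho : preorder_rel rho.

Lemma comp_rel_sym : symmetric (comp_rel rho).
Proof. by move=> a b; rewrite /comp_rel andbCA orbC. Qed.

Lemma comp_eq a b : rho a b -> component rho a = component rho b.
Proof.
move=> H.
have E : connect (comp_rel rho) (cls rho a) (cls rho b).
  by apply: connect1; rewrite /comp_rel !classes_cls (cle_cls Hrho) H.
have Cs := sym_connect_sym comp_rel_sym.
apply/setP => c; rewrite !inE; apply/idP/idP => H'.
- by apply: connect_trans H'; rewrite Cs.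
- exact: connect_trans E H'.
Qed.

Variable G : Type.

Lemma comp_const (d : 'I_n -> G) : (forall a b, rho a b -> d a = d b) ->
  forall x i, component rho x = component rho i -> d x = d i.
Proof.
move=> Hd x i Ec.
have : connect (comp_rel rho) (cls rho x) (cls rho i).
  have : cls rho i \in component rho i by rewrite inE connect0.
  by rewrite -Ec inE.
clear Ec; case/connectP => p; elim: p x => [|b p IH] x /=.
  by move=> _ /esym/cls_eqP [] // H _; exact: Hd.
case/andP => /and3P [_ /classesP [y ->] Hxy] Hp Hl.
have -> : d x = d y.
  case/orP: Hxy; rewrite (cle_cls Hrho) => H; [exact: Hd | exact/esym/Hd].
exact: IH Hp Hl.
Qed.

Lemma orbit_explicit (mul : G -> G -> G) (h h' : 'I_n -> G) :
  same_orbit rho mul h h' <->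
     exists (psi : {set 'I_n} -> {perm 'I_n}) (g : {set 'I_n} -> {set 'I_n})
            (sigma : {set {set 'I_n}} -> G),
       Sfam rho psi /\ Aut0 rho g /\
       forall i : 'I_n,
         h' i = mul (h (psi (g (cls rho i)) (gtilde rho g i)))
                    (sigma (component rho i)).
Proof.
split.
- case=> psi [g [sigma [Hp [Hg ->]]]]; exists psi, g, sigma; do 2!split => //.
  by move=> i; rewrite /Defs.act /actG /actAut /actS (cls_gtilde Hrho Hg).
- case=> psi [g [sigma [Hp [Hg H]]]]; exists psi, g, sigma; do 2!split => //.
  apply: functional_extensionality => i.
  by rewrite H /Defs.act /actG /actAut /actS (cls_gtilde Hrho Hg).
Qed.

End Comb.


Lemma restr_exists n (p : {perm 'I_n}) (b : {set 'I_n}) :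
  (forall x, x \in b -> p x \in b) ->
  exists q : {perm 'I_n}, perm_on b q /\ forall x, x \in b -> q x = p x.
Proof.
move=> Hp.
pose fq x := if x \in b then p x else x.
have fq_inj : injective fq.
  move=> x y; rewrite /fq.
  case: (boolP (x \in b)) => Hx; case: (boolP (y \in b)) => Hy.
  - exact: perm_inj.
  - by move=> E; move: (Hp _ Hx); rewrite E (negbTE Hy).
  - by move=> E; move: (Hp _ Hy); rewrite -E (negbTE Hx).
  - by [].
exists (perm fq_inj); split.
- apply/subsetP => x; rewrite inE permE /fq; case: ifP => // _; by rewrite eqxx.
- by move=> x Hx; rewrite permE /fq Hx.
Qed.

Section Build.
Variables (n : nat) (rho : rel 'I_n).
Hypothesis Hrho : preorder_rel rho.
Variables (G : Type) (mul : G -> G -> G) (one : G) (inv : G -> G).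
Hypothesis HG : is_group mul one inv.

Lemma gmKV x y : mul x (mul (inv x) y) = y.
Proof. by rewrite (gA HG) (gmV HG) (g1m HG). Qed.

Lemma perm_to_orbit (h h' : 'I_n -> G) (s : 'S_n) :
  (forall i j, rho (s j) (s i) = rho j i) ->
  (forall i j, rho j i -> h' (s j) = mul (mul (h j) (inv (h i))) (h' (s i))) ->
  same_orbit rho mul h h'.
Proof.
move=> Hr Hd.
pose t := (s^-1)%g.
have Ht a b : rho (t a) (t b) = rho a b by rewrite -Hr !permKV.
pose d x := mul (inv (h (t x))) (h' x).
have Hdd a b : rho a b -> d a = d b.
  move=> Hab; rewrite /d; have := Hd (t b) (t a); rewrite Ht !permKV => /(_ Hab) ->.
  by rewrite -(gA HG) (gKm HG).
pose sigma (c : {set {set 'I_n}}) :=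
  if [pick x | component rho x == c] is Some x then d x else one.
pose g (a : {set 'I_n}) := [set t x | x in a].
have gcls i : g (cls rho i) = cls rho (t i).
  apply/setP => y; apply/imsetP/idP.
  - by case=> x Hx ->; rewrite in_cls !Ht -in_cls.
  - move=> Hy; exists (s y); last by rewrite /t permK.
    by rewrite in_cls -(Ht i (s y)) -(Ht (s y) i) /t permK -in_cls.
have Hg : Aut0 rho g.
  split; [|split; [|split]].
  - by move=> a /classesP [x ->]; rewrite gcls classes_cls.
  - move=> a b /classesP [x ->] /classesP [y ->]; rewrite !gcls => /cls_eqP [] // H1 H2; rewrite !Ht in H1 H2.
    by rewrite -(cls_eq Hrho (i:=x) (j:=y)) // in_cls H1 H2.
  - by move=> a b /classesP [x ->] /classesP [y ->]; rewrite !gcls !(cle_cls Hrho) Ht.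
  - by move=> a _; rewrite card_imset //; exact: perm_inj.
pose gt := perm (gtilde_inj Hrho Hg).
pose Psi := (gt^-1 * t)%g.
have PsiG i : Psi (gtilde rho g i) = t i.
  have -> : gtilde rho g i = gt i by rewrite permE.
  by rewrite permM permK.
have Psicls x : cls rho (Psi x) = cls rho x.
  have -> : x = gtilde rho g (gt^-1 x)%g by rewrite -[RHS](permE (gtilde_inj Hrho Hg)) permKV.
  by rewrite PsiG (cls_gtilde Hrho Hg) gcls.
have [psi Hpsi] : exists psi : {set 'I_n} -> {perm 'I_n}, forall b,
    b \in Defs.classes rho -> perm_on b (psi b) /\ forall x, x \in b -> psi b x = Psi x.
  apply: (@fin_all_exists _ (fun _ => {perm 'I_n}) (fun b q => b \in Defs.classes rho -> perm_on b q /\ forall x, x \in b -> q x = Psi x)) => b; case: (boolP (b \in Defs.classes rho)) => [Hb|nb].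
  - have Hin : forall x, x \in b -> Psi x \in b.
      move: Hb => /classesP [y ->] x Hx.
      by rewrite -(cls_eq Hrho Hx) -Psicls mem_cls.
    have [q Hq] := restr_exists Hin.
    by exists q.
  - by exists 1%g.
apply/(orbit_explicit Hrho); exists psi, g, sigma; split; [|split].
- by move=> a Ha; case: (Hpsi a Ha).
- exact: Hg.
- move=> i.
  have Hb : g (cls rho i) \in Defs.classes rho by apply: (proj1 Hg); exact: classes_cls.
  rewrite (proj2 (Hpsi _ Hb)) ?gtilde_mem // PsiG /sigma.
  case: pickP => [x /eqP Ex|H]; last by move: (H i); rewrite eqxx.
  by rewrite (comp_const Hrho Hdd Ex) /d gmKV.
Qed.

End Build.


Section Build2.
Variables (k : fieldType) (n : nat) (rho : rel 'I_n).
Hypothesis Hrho : preorder_rel rho.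
Variables (G : Type) (mul : G -> G -> G) (one : G) (inv : G -> G).
Hypothesis HG : is_group mul one inv.

Lemma orbit_to_ciso (h h' : 'I_n -> G) psi g sigma :
  Sfam rho psi -> Aut0 rho g ->
  (forall i, h' i = mul (h (psi (g (cls rho i)) (gtilde rho g i))) (sigma (component rho i))) ->
  exists Phi : 'M[k]_n -> 'M[k]_n, ciso rho mul h h' Phi.
Proof.
move=> Hp Hg Hh.
pose tau i := psi (g (cls rho i)) (gtilde rho g i).
have gC i : g (cls rho i) \in Defs.classes rho by apply: (proj1 Hg); exact: classes_cls.
have tcls i : cls rho (tau i) = g (cls rho i).
  have H1 : tau i \in cls rho (gtilde rho g i).
    by rewrite (cls_gtilde Hrho Hg) /tau (perm_closed _ (Hp _ (gC i))) gtilde_mem.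
  by rewrite (cls_eq Hrho H1) (cls_gtilde Hrho Hg).
have tinj : injective tau.
  move=> i j E.
  have Ec : g (cls rho i) = g (cls rho j) by rewrite -!tcls E.
  move: E; rewrite /tau Ec => /perm_inj; exact: (gtilde_inj Hrho Hg).
pose t := perm tinj.
have Ht a b : rho (t a) (t b) = rho a b.
  rewrite !permE -!(cle_cls Hrho) !tcls.
  by case: Hg => _ [_ [H _]]; apply: H; exact: classes_cls.
have Hcomp a b : rho a b -> sigma (component rho a) = sigma (component rho b).
  by move=> H; rewrite (comp_eq Hrho H).
have hE i : h' i = mul (h (t i)) (sigma (component rho i)) by rewrite permE.
exists (fun M => \matrix_(a, b) M (t a) (t b)); split.
- by move=> M HM a b; rewrite mxE => /HM; rewrite Ht.
- move=> M1 M2 _ _ E; apply/matrixP => x y.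
  have := congr1 (fun M : 'M[k]_n => M ((t^-1)%g x) ((t^-1)%g y)) E.
  by rewrite /= !mxE !permKV.
- move=> M' HM'; exists (\matrix_(x, y) M' ((t^-1)%g x) ((t^-1)%g y)); split.
  + move=> x y; rewrite mxE => /HM'.
    by rewrite -Ht !permKV.
  + by apply/matrixP => a b; rewrite !mxE !permK.
- by move=> c M1 M2 _ _; apply/matrixP => a b; rewrite !mxE.
- move=> M1 M2 _ _; apply/matrixP => a b; rewrite !mxE.
  rewrite (reindex_inj (@perm_inj _ t)) /=; apply: eq_bigr => c _; by rewrite !mxE.
- by apply/matrixP => a b; rewrite !mxE (inj_eq (@perm_inj _ t)).
- move=> s M HM; split.
  + move=> HS a b; rewrite mxE => Mab.
    have Hba : rho (t b) (t a) by exact: HM Mab.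
    rewrite Ht in Hba.
    by rewrite !hE (HS _ _ Mab) (Hcomp _ _ Hba) (gA HG).
  + move=> HS x y Mxy.
    have := HS ((t^-1)%g x) ((t^-1)%g y); rewrite mxE !permKV => /(_ Mxy).
    have Hyx : rho y x by exact: HM Mxy.
    rewrite !hE !permKV (gA HG).
    have -> : sigma (component rho ((t^-1)%g y)) = sigma (component rho ((t^-1)%g x)).
      by apply: Hcomp; rewrite -Ht !permKV.
    exact: (gmI HG).
Qed.

End Build2.


Theorem theorem7p1 (k : fieldType) (G : Type) (mul : G -> G -> G) (one : G)
  (inv : G -> G) (HG : is_group mul one inv)
  (n : nat) (rho : rel 'I_n) (Hrho : preorder_rel rho)
  (B : 'M[k]_n) (HB : B \in unitmx) (h h' : 'I_n -> G) :
  (graded_iso rho B mul h h' <-> same_orbit rho mul h h') /\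
  (same_orbit rho mul h h' <->
     exists (psi : {set 'I_n} -> {perm 'I_n}) (g : {set 'I_n} -> {set 'I_n})
            (sigma : {set {set 'I_n}} -> G),
       Sfam rho psi /\ Aut0 rho g /\
       forall i : 'I_n,
         h' i = mul (h (psi (g (cls rho i)) (gtilde rho g i)))
                    (sigma (component rho i))).
Proof.
have P2 := orbit_explicit Hrho mul h h'.
split; last exact: P2.
split.
- move=> /(iso_to_ciso HB Hrho) [Phi HPhi].
  have [s [H1 H2]] := core_perm Hrho HG HPhi.
  have X := @perm_to_orbit n rho Hrho G mul one inv HG h h' s H1 H2. exact X.
- move=> /P2 [psi [g [sigma [Hp [Hg Hh]]]]].
  have [Phi HPhi] := orbit_to_ciso k Hrho HG Hp Hg Hh.
  have X := ciso_to_iso HB Hrho HPhi. exact X.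
Qed.
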